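(* Let $(G,\sigma)$ be a vertex-oriented 4-regular plane graph with a vertex $v$ such that $V(G)\setminus\{v\}$ is the disjoint union of two nonempty sets $A_1,A_2$, and the edges of $G$ not having both endpoints in the same set $A_1$ or $A_2$ are exactly six: two edges $e_1,e_2$ joining $v$ to $A_1$, two edges $e_3,e_4$ joining $v$ to $A_2$, and two edges $t,b$ each joining a vertex of $A_1$ to a vertex of $A_2$ (endpoints need not be distinct). Suppose $\sigma(v)=\{\{e_1,e_2\},\{e_3,e_4\}\}$, and that $G$ is drawn so that there are disjoint simple closed curves $S_1,S_2$ with $A_i$ inside $S_i$, $v$ outside both, the edges $t,e_1,e_2,b$ crossing $S_1$ in this cyclic order and $t,e_3,e_4,b$ crossing $S_2$ correspondingly. Let $G_1$ be the graph with vertex set $A_1\cup\{v_1\}$ ($v_1$ a new vertex) whose edges are the edges of $G$ with both ends in $A_1$, the edges $e_1,e_2$ with endpoint $v$ replaced by $v_1$, and new edges $t_1,b_1$ joining $v_1$ to the $A_1$-endpoints of $t$ and $b$ respectively; let $\sigma_1$ agree with $\sigma$ on $A_1$ (with $t_1,b_1$ in place of $t,b$) and $\sigma_1(v_1)=\{\{e_1,e_2\},\{t_1,b_1\}\}$. Define $(G_2,\sigma_2)$ symmetrically using $A_2$, $e_3,e_4$, a new vertex $v_2$, new edges $t_2,b_2$, and $\sigma_2(v_2)=\{\{e_3,e_4\},\{t_2,b_2\}\}$. If $(G_1,\sigma_1)$ and $(G_2,\sigma_2)$ both admit $k$-o-colourings, then $(G,\sigma)$ admits a $k$-o-colouring.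
   Context: Graphs may have loops and multiple edges. A 4-regular plane graph has a fixed planar embedding giving a cyclic (embedding) order of the four edge-ends at each vertex. Orientation of a vertex $v$: if $v$ has no loop, a partition of its four edges into two cells of two edges, each cell consisting of two edges consecutive in the embedding order at $v$; if $v$ has exactly one loop $e$ and other edges $f,g$, either $\{\{e,f\},\{e,g\}\}$ (transverse) or $\{\{f,g\},\{e\}\}$ (nontransverse); if $v$ has two loops $e_1,e_2$, the single cell $\{e_1,e_2\}$. A vertex-orientation assigns an orientation to each vertex. An o-colouring of $(G,\sigma)$ is an assignment of colours to edges such that at every vertex $v$ exactly two distinct colours appear on its incident edges and each cell of $\sigma(v)$ contains edges of both colours; a $k$-o-colouring uses at most $k$ colours. (Whether a colouring is an o-colouring depends only on the cells of the orientation, not on the embedding.) *)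

(* Defs.v *)
From HB Require Import structures.
From mathcomp Require Import all_boot.
Set Implicit Arguments. Unset Strict Implicit. Unset Printing Implicit Defensive.

(* A graph (loops and multiple edges allowed) is given by a vertex finType V,
   an edge finType E and an endpoint map ends : E -> V * V.
   Edge-ends ("darts") are the elements of E * bool:
   (e, true) is the end at (ends e).1, (e, false) the end at (ends e).2. *)

Definition incident (V E : finType) (ends : E -> V * V) (x : V) : {set E} :=
  [set e | ((ends e).1 == x) || ((ends e).2 == x)].

Definition loops_at (V E : finType) (ends : E -> V * V) (x : V) : {set E} :=
  [set e | ((ends e).1 == x) && ((ends e).2 == x)].

Definition dvert (V E : finType) (ends : E -> V * V) (d : E * bool) : V :=
  if d.2 then (ends d.1).1 else (ends d.1).2.

Definition dflip (E : finType) (d : E * bool) : E * bool := (d.1, ~~ d.2).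

(* 4-regular: every vertex has exactly four edge-ends (a loop counts twice). *)
Definition four_regular (V E : finType) (ends : E -> V * V) : Prop :=
  forall x : V, #|[set d : E * bool | dvert ends d == x]| = 4.

(* Embedding (rotation system): rot is a permutation of the edge-ends whose
   cycles are exactly the sets of edge-ends at each vertex; it gives the
   cyclic embedding order at each vertex. *)
Definition rotation_system (V E : finType) (ends : E -> V * V)
    (rot : E * bool -> E * bool) : Prop :=
  [/\ injective rot,
      (forall d, dvert ends (rot d) = dvert ends d) &
      (forall d d', dvert ends d = dvert ends d' -> fconnect rot d d')].

(* Planarity of the embedding: Euler's formula  V + F = E + 2 * (#components),
   i.e. every component has genus 0.  Faces are the orbits of rot \o dflip. *)
Definition plane_rotation (E : finType) (rot : E * bool -> E * bool) : Prop :=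
  fcard rot predT + fcard (fun d => rot (dflip d)) predT
  = #|E| + 2 * n_comp (fun d d' => (d' == rot d) || (d' == dflip d)) predT.

Definition valid_orientation (V E : finType) (ends : E -> V * V)
    (rot : E * bool -> E * bool) (x : V) (C : {set {set E}}) : Prop :=
  [\/ loops_at ends x = set0 /\
        (exists d, dvert ends d = x /\
           C = [set [set d.1; (rot d).1];
                    [set (rot (rot d)).1; (rot (rot (rot d))).1]]),
      (exists e f g, [/\ loops_at ends x = [set e], incident ends x = [set e; f; g],
          uniq [:: e; f; g] &
          (C = [set [set e; f]; [set e; g]] \/ C = [set [set f; g]; [set e]])]) |
      (exists e1 e2, [/\ e1 != e2, loops_at ends x = [set e1; e2] &
          C = [set [set e1; e2]]])].

Definition vertex_orientation (V E : finType) (ends : E -> V * V)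
    (rot : E * bool -> E * bool) (sigma : V -> {set {set E}}) : Prop :=
  forall x, valid_orientation ends rot x (sigma x).

Definition o_colouring (V E Col : finType) (ends : E -> V * V)
    (sigma : V -> {set {set E}}) (col : E -> Col) : Prop :=
  forall x : V, #|col @: incident ends x| = 2 /\
    (forall c, c \in sigma x ->
       exists e e', [/\ e \in c, e' \in c & col e != col e']).

Definition k_o_colourable (V E : finType) (ends : E -> V * V)
    (sigma : V -> {set {set E}}) (k : nat) : Prop :=
  exists col : E -> 'I_k, o_colouring ends sigma col.

Definition in_side (V E : finType) (ends : E -> V * V) (A : {set V}) (e : E) : bool :=
  ((ends e).1 \in A) && ((ends e).2 \in A).

Definition joins (V E : finType) (ends : E -> V * V) (e : E) (x : V) (A : {set V}) : bool :=
  ((ends e).1 == x) && ((ends e).2 \in A) || ((ends e).2 == x) && ((ends e).1 \in A).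

Definition joins_sets (V E : finType) (ends : E -> V * V) (e : E) (A B : {set V}) : bool :=
  ((ends e).1 \in A) && ((ends e).2 \in B) || ((ends e).2 \in A) && ((ends e).1 \in B).

(* ---- the side graph (G_i, sigma_i) ----
   Vertices: Some x for x in A, and None for the new vertex v_i.
   Edges: inl e for edges e of G with both ends in A or e in {ea, eb};
          inr true = t_i,  inr false = b_i. *)
Definition side_pred (V E : finType) (ends : E -> V * V) (A : {set V}) (ea eb : E)
  (e : E) : bool := in_side ends A e || (e == ea) || (e == eb).


Definition sideE (V E : finType) (ends : E -> V * V) (A : {set V}) (ea eb : E) :=
  ({e : E | side_pred ends A ea eb e} + bool)%type.

Definition endpoint_in (V E : finType) (ends : E -> V * V) (A : {set V}) (e : E) : V :=
  if (ends e).1 \in A then (ends e).1 else (ends e).2.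

(* vertices of G outside A (in particular v) are sent to the new vertex None *)
Definition vproj (V : finType) (A : {set V}) (x : V) : option {x : V | x \in A} :=
  insub x.

Definition side_back (V E : finType) (ends : E -> V * V) (A : {set V}) (ea eb tt bb : E)
  (e : sideE ends A ea eb) : E :=
  match e with inl e' => val e' | inr true => tt | inr false => bb end.

Definition side_ends (V E : finType) (ends : E -> V * V) (A : {set V}) (ea eb tt bb : E)
  (e : sideE ends A ea eb) : option {x : V | x \in A} * option {x : V | x \in A} :=
  match e with
  | inl e' => (vproj A (ends (val e')).1, vproj A (ends (val e')).2)
  | inr true => (None, vproj A (endpoint_in ends A tt))
  | inr false => (None, vproj A (endpoint_in ends A bb))
  end.

Definition side_orient (V E : finType) (ends : E -> V * V) (sigma : V -> {set {set E}})
  (A : {set V}) (ea eb tt bb : E) (y : option {x : V | x \in A})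
  : {set {set sideE ends A ea eb}} :=
  match y with
  | Some x => [set [set e | @side_back V E ends A ea eb tt bb e \in c] | c : {set E} in sigma (val x)] 
  | None => [set [set e | @side_back V E ends A ea eb tt bb e \in [set ea; eb]];
                 [set (inr true : sideE ends A ea eb); inr false]]
  end.

(* Main.v *)
Require Import Defs.
From HB Require Import structures.
From mathcomp Require Import all_boot all_fingroup.
Set Implicit Arguments. Unset Strict Implicit. Unset Printing Implicit Defensive.

Lemma vproj_Some (V : finType) (A : {set V}) y xs : vproj A y = Some xs -> y = val xs.
Proof. rewrite /vproj; case: insubP => [u _ <- [->]|_] //. Qed.

Lemma endpoint_in_end (V E : finType) (ends : E -> V * V) A e :
  (endpoint_in ends A e == (ends e).1) || (endpoint_in ends A e == (ends e).2).
Proof. rewrite /endpoint_in; case: ifP => _; by rewrite eqxx ?orbT. Qed.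

Lemma endx_lem (V E : finType) (ends : E -> V * V) (A : {set V}) x u : x \in A ->
  ~~ in_side ends A u -> u \in incident ends x -> endpoint_in ends A u = x.
Proof.
move=> xA; rewrite inE /endpoint_in /in_side; case: (ends u) => p q /=.
move=> Hu /orP [] /eqP Hx; subst; case: ifP => H1 //.
- by rewrite xA in H1.
- by rewrite H1 xA in Hu.
Qed.

Section S.
Variables (V E : finType) (ends : E -> V * V) (sigma : V -> {set {set E}})
  (A : {set V}) (ea eb tt bb : E) (k : nat)
  (cs : sideE ends A ea eb -> 'I_k) (col : E -> 'I_k) (g : 'I_k -> 'I_k).
Local Notation SE := (@side_ends V E ends A ea eb tt bb).
Local Notation SB := (@side_back V E ends A ea eb tt bb).
Local Notation SO := (@side_orient V E ends sigma A ea eb tt bb).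

Lemma side_vertex x :
 o_colouring (SE) (SO) cs ->
 injective g ->
 (forall s, col (SB s) = g (cs s)) ->
 ~~ in_side ends A tt -> ~~ in_side ends A bb ->
 (forall e, e \in incident ends x -> [|| side_pred ends A ea eb e, e == tt | e == bb]) ->
 x \in A ->
 #|col @: incident ends x| = 2 /\
 (forall c, c \in sigma x -> exists e e', [/\ e \in c, e' \in c & col e != col e']).
Proof.
move=> Hcs ginj Hcol Ht Hb Hinc xA.
pose xs : {x | x \in A} := exist _ x xA.
have vx : vproj A x = Some xs by rewrite /vproj (insubT (fun y => y \in A) xA).
have endx := endx_lem xA.
have Einc : incident ends x = SB @: incident (SE) (Some xs).
  apply/setP => e; apply/idP/idP.
  - move=> He; have := Hinc e He; case/or3P => [Hs|/eqP Ee|/eqP Ee].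
    + apply/imsetP; exists (inl (exist _ e Hs)) => //.
      rewrite inE in He; rewrite inE /=.
      by case/orP: He => /eqP ->; rewrite vx eqxx ?orbT.
    + apply/imsetP; exists (inr true); last by rewrite Ee.
      by rewrite inE /= endx ?vx ?eqxx // -Ee.
    + apply/imsetP; exists (inr false); last by rewrite Ee.
      by rewrite inE /= endx ?vx ?eqxx // -Ee.
  - case/imsetP => s Hs ->; rewrite inE.
    case: s Hs => [[e' Hs']|[]]; rewrite inE /=.
    + by case/orP => /eqP /vproj_Some /= ->; rewrite eqxx ?orbT.
    + by move=> /eqP /vproj_Some /= <-; rewrite eq_sym (eq_sym _.2); exact: endpoint_in_end.
    + by move=> /eqP /vproj_Some /= <-; rewrite eq_sym (eq_sym _.2); exact: endpoint_in_end.
have [Hc1 Hc2] := Hcs (Some xs).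
split.
  rewrite Einc -imset_comp (eq_imset _ (fun s => Hcol s)).
  by rewrite imset_comp card_imset.
move=> c Hc.
have Hc' : [set e | SB e \in c] \in
   SO (Some xs) by apply/imsetP; exists c.
have [e [e' [He He' Hne]]] := Hc2 _ Hc'.
exists (SB e), (SB e').
rewrite !inE in He He'; split => //.
by rewrite !Hcol (inj_eq ginj).
Qed.

Lemma side_tb :
 o_colouring (SE) (SO) cs ->
 cs (inr true) != cs (inr false).
Proof.
move=> Hcs; have [_ Hc2] := Hcs None.
have [] := Hc2 [set inr true; inr false]; first by rewrite !inE eqxx orbT.
move=> e [e' [He He' Hne]]; rewrite !inE in He He'.
case/orP: He => /eqP Ee; case/orP: He' => /eqP Ee'; subst. - by rewrite eqxx in Hne.
- done.
- by rewrite eq_sym.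
- by rewrite eqxx in Hne.
Qed.

Lemma side_new v :
 o_colouring (SE) (SO) cs ->
 injective g ->
 (forall s, col (SB s) = g (cs s)) ->
 joins ends ea v A -> joins ends eb v A -> v \notin A ->
 [/\ col ea != col eb, col tt != col bb, col ea \in [set col tt; col bb]
    & col eb \in [set col tt; col bb]].
Proof.
move=> Hcs ginj Hcol Ja Jb vA.
have [Hc1 Hc2] := Hcs None.
have Htb := side_tb Hcs.
have Ht := Hcol (inr true); have Hb := Hcol (inr false); simpl in Ht, Hb.
have pa : side_pred ends A ea eb ea by rewrite /side_pred eqxx !orbT.
have pb : side_pred ends A ea eb eb by rewrite /side_pred eqxx !orbT.
have Ha := Hcol (inl (exist _ ea pa)); have Hb' := Hcol (inl (exist _ eb pb)).
simpl in Ha, Hb'.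
have tbne : col tt != col bb by rewrite Ht Hb (inj_eq ginj).
have vv : vproj A v = None by rewrite /vproj insubN.
pose T := g @: (cs @: incident (SE) None).
have cT : #|T| = 2 by rewrite card_imset.
have inT : forall s, s \in incident (SE) None ->
   g (cs s) \in T by move=> s Hs; rewrite imset_f // imset_f.
have ET : T = [set col tt; col bb].
  apply/eqP; rewrite eq_sym eqEcard cards2 tbne cT andbT.
  by apply/subsetP => y; rewrite !inE => /orP [] /eqP ->; rewrite ?Ht ?Hb; apply: inT;
     rewrite inE eqxx.
split => //.
- have [] := Hc2 [set e | SB e \in [set ea; eb]];
    first by rewrite !inE eqxx.
  move=> e [e' [He He' Hne]]; rewrite !inE in He He'.
  have : col (SB e) != col (SB e')
    by rewrite !Hcol (inj_eq ginj).
  by case/orP: He => /eqP ->; case/orP: He' => /eqP ->; rewrite ?eqxx // eq_sym.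
- rewrite -ET Ha; apply: inT; rewrite inE /=.
  by move: Ja; rewrite /joins => /orP [] /andP [] /eqP -> _; rewrite vv eqxx ?orbT.
- rewrite -ET Hb'; apply: inT; rewrite inE /=.
  by move: Jb; rewrite /joins => /orP [] /andP [] /eqP -> _; rewrite vv eqxx ?orbT.
Qed.
End S.

Ltac neqt Hu := move: Hu; apply: contraL => /eqP ->; rewrite /= !inE ?eqxx /= ?orbT ?andbF.

Lemma inc_in (V E : finType) (ends : E -> V * V) (B : {set V}) e x :
  in_side ends B e -> e \in incident ends x -> x \in B.
Proof. by rewrite /in_side inE => /andP [H1 H2] /orP [] /eqP <-. Qed.

Lemma joins_inc (V E : finType) (ends : E -> V * V) (B : {set V}) e y x :
  joins ends e y B -> e \in incident ends x -> x != y -> x \notin B -> False.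
Proof.
rewrite /joins inE; case: (ends e) => p q /=.
by case/orP => /andP [/eqP -> H] /orP [] /eqP <-; rewrite ?eqxx ?H.
Qed.

Lemma joins_sets_inc (V E : finType) (ends : E -> V * V) (A B : {set V}) e x :
  joins_sets ends e A B -> e \in incident ends x -> x \notin A -> x \notin B -> False.
Proof.
rewrite /joins_sets inE; case: (ends e) => p q /=.
by case/orP => /andP [H1 H2] /orP [] /eqP <-; rewrite ?H1 ?H2.
Qed.

Theorem lemma3p3 (V E : finType) (ends : E -> V * V) (rot : E * bool -> E * bool)
  (sigma : V -> {set {set E}}) (v : V) (A1 A2 : {set V})
  (e1 e2 e3 e4 t b : E) (k : nat) :
  (* (G, sigma) is a vertex-oriented 4-regular plane graph *)
  four_regular ends -> rotation_system ends rot -> plane_rotation rot ->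
  vertex_orientation ends rot sigma ->
  (* V(G) \ {v} is the disjoint union of nonempty A1, A2 *)
  v \notin A1 -> v \notin A2 -> [disjoint A1 & A2] -> A1 :|: A2 = [set~ v] ->
  A1 != set0 -> A2 != set0 ->
  (* the edges not inside A1 or A2 are exactly the six distinct edges *)
  uniq [:: e1; e2; e3; e4; t; b] ->
  (forall e, (~~ in_side ends A1 e && ~~ in_side ends A2 e)
             = (e \in [:: e1; e2; e3; e4; t; b])) ->
  joins ends e1 v A1 -> joins ends e2 v A1 ->
  joins ends e3 v A2 -> joins ends e4 v A2 ->
  joins_sets ends t A1 A2 -> joins_sets ends b A1 A2 ->
  sigma v = [set [set e1; e2]; [set e3; e4]] ->
  k_o_colourable (@side_ends V E ends A1 e1 e2 t b)
    (@side_orient V E ends sigma A1 e1 e2 t b) k ->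
  k_o_colourable (@side_ends V E ends A2 e3 e4 t b)
    (@side_orient V E ends sigma A2 e3 e4 t b) k ->
  k_o_colourable ends sigma k.
Proof.
move=> _ _ _ _ vA1 vA2 dis U _ _ Hu Hsix J1 J2 J3 J4 Jt Jb Sv [cs1 H1] [cs2 H2].
have six : forall e, e \in [:: e1; e2; e3; e4; t; b] ->
    ~~ in_side ends A1 e /\ ~~ in_side ends A2 e.
  by move=> e; rewrite -Hsix => /andP.
have [t1 t2] := six t ltac:(by rewrite !inE eqxx ?orbT).
have [b1 b2] := six b ltac:(by rewrite !inE eqxx ?orbT).
have [e11 e12] := six e1 ltac:(by rewrite !inE eqxx ?orbT).
have [e21 e22] := six e2 ltac:(by rewrite !inE eqxx ?orbT).
have [e31 e32] := six e3 ltac:(by rewrite !inE eqxx ?orbT).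
have [e41 e42] := six e4 ltac:(by rewrite !inE eqxx ?orbT).
have ntb : t != b by neqt Hu.
have sp1t : side_pred ends A1 e1 e2 t = false.
  by rewrite /side_pred (negbTE t1) /=; apply/norP; split; neqt Hu.
have sp1b : side_pred ends A1 e1 e2 b = false.
  by rewrite /side_pred (negbTE b1) /=; apply/norP; split; neqt Hu.
have sp2t : side_pred ends A2 e3 e4 t = false.
  by rewrite /side_pred (negbTE t2) /=; apply/norP; split; neqt Hu.
have sp2b : side_pred ends A2 e3 e4 b = false.
  by rewrite /side_pred (negbTE b2) /=; apply/norP; split; neqt Hu.
have sp12 : forall e, side_pred ends A1 e1 e2 e -> side_pred ends A2 e3 e4 e = false.
  move=> e; rewrite /side_pred => /orP [/orP [Hi|/eqP->]|/eqP->].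
  - have Hn : ~~ in_side ends A2 e.
      move: Hi; rewrite /in_side => /andP [H _]; by rewrite (disjointFr dis H).
    rewrite (negbTE Hn) /=; apply/norP; split; apply/eqP => Ee; subst.
    + by rewrite Hi in e31.
    + by rewrite Hi in e41.
  - by rewrite (negbTE e12) /=; apply/norP; split; neqt Hu.
  - by rewrite (negbTE e22) /=; apply/norP; split; neqt Hu.
have tb1 := side_tb H1.
have tb2 := side_tb H2.
pose a := cs2 (inr true); pose b' := cs2 (inr false).
pose c := cs1 (inr true); pose d := cs1 (inr false).
pose p1 := tperm a c; pose p2 := tperm (p1 b') d.
pose g := fun i => p2 (p1 i).
have ginj : injective g by move=> i j /perm_inj /perm_inj.
have ga : g a = c.
  rewrite /g /p1 tpermL /p2 tpermD //; last by rewrite eq_sym.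
  by rewrite /p1 -{2}(tpermL a c) (inj_eq perm_inj) eq_sym.
have gb : g b' = d by rewrite /g /p2 tpermL.
pose col (e : E) : 'I_k :=
  match (insub e : option {e : E | side_pred ends A1 e1 e2 e}) with
  | Some s => cs1 (inl s)
  | None => match (insub e : option {e : E | side_pred ends A2 e3 e4 e}) with
            | Some s => g (cs2 (inl s))
            | None => if e == t then cs1 (inr true) else cs1 (inr false)
            end
  end.
have Hcol1 : forall s, col (@side_back V E ends A1 e1 e2 t b s) = id (cs1 s).
  case=> [s|[]] /=; rewrite /col.
  - by rewrite valK.
  - by rewrite !insubN ?sp1t ?sp2t ?eqxx.
  - by rewrite !insubN ?sp1b ?sp2b // eq_sym (negbTE ntb).
have Hcol2 : forall s, col (@side_back V E ends A2 e3 e4 t b s) = g (cs2 s).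
  case=> [s|[]] /=; rewrite /col.
  - rewrite insubN ?valK //; apply/negP => Hs; by move: (sp12 _ Hs); rewrite (valP s).
  - by rewrite !insubN ?sp1t ?sp2t ?eqxx.
  - by rewrite !insubN ?sp1b ?sp2b // eq_sym (negbTE ntb).
have idinj : injective (@id 'I_k) by [].
have [n12 ntb' c1 c2] := side_new H1 idinj Hcol1 J1 J2 vA1.
have [n34 _ c3 c4] := side_new H2 ginj Hcol2 J3 J4 vA2.
rewrite !inE in c1 c2 c3 c4.
exists col => x.
have [->|xv] := eqVneq x v.
  split.
  - have Hsub : col @: incident ends v \subset [set col t; col b].
      apply/subsetP => y /imsetP [e He ->].
      have : e \in [:: e1; e2; e3; e4; t; b].
        rewrite -Hsix; apply/andP; split; apply/negP => Hi.
        + by rewrite (inc_in Hi He) in vA1.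
        + by rewrite (inc_in Hi He) in vA2.
      rewrite !inE => Hm; repeat case/orP: Hm => Hm; move/eqP: Hm => Ee; subst e.
      all: try by rewrite ?eqxx ?orbT.
    have Hsup : [set col e1; col e2] \subset col @: incident ends v.
      apply/subsetP => y; rewrite !inE => /orP [] /eqP ->; apply: imset_f;
        rewrite inE; [move: J1|move: J2]; rewrite /joins;
        by case/orP => /andP [-> _]; rewrite ?orbT.
    apply/eqP; rewrite eqn_leq; apply/andP; split.
    + by apply: leq_trans (subset_leq_card Hsub) _; rewrite cards2 ntb'.
    + by apply: leq_trans _ (subset_leq_card Hsup); rewrite cards2 n12.
  - move=> cc; rewrite Sv !inE => /orP [] /eqP ->.
    + by exists e1, e2; rewrite !inE !eqxx ?orbT.
    + by exists e3, e4; rewrite !inE !eqxx ?orbT.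
have : x \in A1 :|: A2 by rewrite U !inE.
rewrite inE => /orP [xA|xA].
- apply: (side_vertex H1 idinj Hcol1 t1 b1 _ xA) => e He.
  have := Hsix e; case: (boolP (in_side ends A1 e)) => Hi /=; first by rewrite /side_pred Hi.
  have Hi2 : ~~ in_side ends A2 e.
    by apply/negP => Hi2; move: (inc_in Hi2 He); rewrite (disjointFr dis xA).
  rewrite Hi2 => /esym; rewrite !inE => Hm; repeat case/orP: Hm => Hm; move/eqP: Hm => Ee; subst e;
    rewrite /side_pred ?eqxx ?orbT //.
  + by case: (joins_inc J3 He xv (negbT (disjointFr dis xA))).
  + by case: (joins_inc J4 He xv (negbT (disjointFr dis xA))).
- apply: (side_vertex H2 ginj Hcol2 t2 b2 _ xA) => e He.
  have := Hsix e; case: (boolP (in_side ends A2 e)) => Hi /=; first by rewrite /side_pred Hi.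
  have Hi2 : ~~ in_side ends A1 e.
    by apply/negP => Hi2; move: (inc_in Hi2 He); rewrite (disjointFl dis xA).
  rewrite Hi2 andbT => /esym; rewrite !inE => Hm; repeat case/orP: Hm => Hm; move/eqP: Hm => Ee; subst e;
    rewrite /side_pred ?eqxx ?orbT //.
  + by case: (joins_inc J1 He xv (negbT (disjointFl dis xA))).
  + by case: (joins_inc J2 He xv (negbT (disjointFl dis xA))).
Qed.
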